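(* For all real numbers $a,b,c>0$, \[ 2(a+b+c)^{3/2} \leq \left(\sqrt{a+b} + \sqrt{b+c} + \sqrt{c+a}\right) \sqrt{a^2+b^2+c^2+ab+bc+ca}. \] *)

(* Defs.v *)
From Stdlib Require Import Reals.

(* Main.v *)
Require Import Defs.
From Stdlib Require Import Reals Lra Psatz.
Open Scope R_scope.

Lemma holder3 (x y z : R) : 0 < x -> 0 < y -> 0 < z ->
  (x^2+y^2+z^2)^3 <= (x+y+z)^2 * (x^4+y^4+z^4).
Proof.
  intros hx hy hz.
  set (S1 := x+y+z). set (S2 := x^2+y^2+z^2). set (S3 := x^3+y^3+z^3).
  set (S4 := x^4+y^4+z^4).
  assert (c1 : S2^2 <= S1*S3).
  { unfold S1,S2,S3. assert (0 <= x*y*(x-y)^2) by (apply Rmult_le_pos; [apply Rmult_le_pos; [apply pow2_ge_0 || lra | apply pow2_ge_0 || lra] | apply pow2_ge_0]). assert (0 <= y*z*(y-z)^2) by (apply Rmult_le_pos; [apply Rmult_le_pos; [apply pow2_ge_0 || lra | apply pow2_ge_0 || lra] | apply pow2_ge_0]). assert (0 <= z*x*(z-x)^2) by (apply Rmult_le_pos; [apply Rmult_le_pos; [apply pow2_ge_0 || lra | apply pow2_ge_0 || lra] | apply pow2_ge_0]). nra. }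
  assert (c2 : S3^2 <= S2*S4).
  { unfold S2,S3,S4. assert (0 <= x^2*y^2*(x-y)^2) by (apply Rmult_le_pos; [apply Rmult_le_pos; [apply pow2_ge_0 || lra | apply pow2_ge_0 || lra] | apply pow2_ge_0]). assert (0 <= y^2*z^2*(y-z)^2) by (apply Rmult_le_pos; [apply Rmult_le_pos; [apply pow2_ge_0 || lra | apply pow2_ge_0 || lra] | apply pow2_ge_0]). assert (0 <= z^2*x^2*(z-x)^2) by (apply Rmult_le_pos; [apply Rmult_le_pos; [apply pow2_ge_0 || lra | apply pow2_ge_0 || lra] | apply pow2_ge_0]). nra. }
  assert (p2 : 0 < S2) by (unfold S2; pose proof (pow_lt x 2 hx); pose proof (pow_lt y 2 hy); pose proof (pow_lt z 2 hz); lra).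
  assert (p1 : 0 < S1) by (unfold S1; nra).
  assert (p3 : 0 < S3) by (unfold S3; pose proof (pow_lt x 3 hx); pose proof (pow_lt y 3 hy); pose proof (pow_lt z 3 hz); lra).
  assert (h : S2^4 <= S1^2 * S2 * S4).
  { assert (S2^4 <= (S1*S3)^2).
    { replace (S2^4) with ((S2^2)^2) by ring. apply pow_incr. nra. }
    nra. }
  assert (S2 * S2^3 <= S2 * (S1^2*S4)) by nra.
  nra.
Qed.

Theorem mainTheorem6 (a b c : R) (ha : 0 < a) (hb : 0 < b) (hc : 0 < c) :
  2 * Rpower (a + b + c) (3 / 2) <=
  (sqrt (a + b) + sqrt (b + c) + sqrt (c + a)) *
  sqrt (a ^ 2 + b ^ 2 + c ^ 2 + a * b + b * c + c * a).
Proof.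
  assert (hs : 0 < a+b+c) by lra.
  replace (Rpower (a+b+c) (3/2)) with ((a+b+c) * sqrt (a+b+c)).
  2:{ replace (3/2) with (1 + /2) by field.
      rewrite Rpower_plus, Rpower_1 by lra. rewrite <- Rpower_sqrt by lra.
      try reflexivity; f_equal; f_equal; field. }
  set (x := sqrt (a+b)). set (y := sqrt (b+c)). set (z := sqrt (c+a)).
  set (s := sqrt (a+b+c)). set (q := sqrt (a ^ 2 + b ^ 2 + c ^ 2 + a * b + b * c + c * a)).
  assert (hx2 : x*x = a+b) by (apply sqrt_sqrt; lra).
  assert (hy2 : y*y = b+c) by (apply sqrt_sqrt; lra).
  assert (hz2 : z*z = c+a) by (apply sqrt_sqrt; lra).
  assert (hs2 : s*s = a+b+c) by (apply sqrt_sqrt; lra).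
  assert (hq2 : q*q = a ^ 2 + b ^ 2 + c ^ 2 + a * b + b * c + c * a) by (apply sqrt_sqrt; nra).
  assert (hx : 0 < x) by (apply sqrt_lt_R0; lra).
  assert (hy : 0 < y) by (apply sqrt_lt_R0; lra).
  assert (hz : 0 < z) by (apply sqrt_lt_R0; lra).
  assert (hs0 : 0 <= s) by apply sqrt_pos.
  assert (hq : 0 <= q) by apply sqrt_pos.
  pose proof (holder3 x y z hx hy hz) as H.
  assert (e1 : x^2+y^2+z^2 = 2*(a+b+c)) by nra.
  assert (e2 : x^4+y^4+z^4 = 2*(q*q)).
  { replace (x^4) with ((x*x)^2) by ring. replace (y^4) with ((y*y)^2) by ring.
    replace (z^4) with ((z*z)^2) by ring. rewrite hx2, hy2, hz2, hq2. ring. }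
  rewrite e1, e2 in H.
  assert (sq : (2*((a+b+c)*s))^2 <= ((x+y+z)*q)^2).
  { replace ((2*((a+b+c)*s))^2) with (4*(a+b+c)^2*(s*s)) by ring.
    rewrite hs2. nra. }
  assert (0 <= (x+y+z)*q) by nra.
  destruct (Rle_lt_dec (2*((a+b+c)*s)) ((x+y+z)*q)) as [|Hl]; [lra|].
  exfalso. assert (((x+y+z)*q)^2 < (2*((a+b+c)*s))^2) by (simpl; nra).
  lra.
Qed.
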